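(* Let $\Pi\subseteq\Sigma$. The cone $\sigma_\Pi$ contains a nonzero linear subspace of $N_\mathbb{R}$ if and only if $\sigma^1_\Pi\cap\sigma^2_\Pi\ne\{0\}$.
   Context: $N\cong\mathbb{Z}^d$, $\sigma\subset N_\mathbb{R}$ a strongly convex rational polyhedral cone of dimension $d$, $\Sigma=\sigma(1)$ its set of rays, $n(\rho)$ the primitive generator of $\rho$. $\sigma_\Pi$ is the cone generated over $\mathbb{R}_{\ge0}$ by $-n(\rho)$, $\rho\in\Pi$, and $n(\rho)$, $\rho\in\Sigma\setminus\Pi$; $\sigma^1_\Pi$ is the cone generated over $\mathbb{R}_{\ge0}$ by $n(\rho)$, $\rho\in\Pi$; $\sigma^2_\Pi$ is the cone generated over $\mathbb{R}_{\ge0}$ by $n(\rho)$, $\rho\in\Sigma\setminus\Pi$ (the cone generated by the empty set is $\{0\}$). *)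

(* Defs.v *)
From HB Require Import structures.
From mathcomp Require Import all_boot all_order all_algebra.
From mathcomp Require Import reals.
Set Implicit Arguments. Unset Strict Implicit. Unset Printing Implicit Defensive.
Import Order.TTheory GRing.Theory Num.Theory.
Local Open Scope ring_scope.

(* N_R = R^d is modelled by row vectors 'rV[R]_d; N = Z^d is the set of
   vectors with integer coordinates. Subsets of N_R are predicates. *)
Section Cones.
Variables (R : realType) (d : nat).
Local Notation V := 'rV[R]_d.

Definition lattice (x : V) : Prop := forall j, x ord0 j \is a Num.int.

Definition dotp (m x : V) : R := \sum_j m ord0 j * x ord0 j.

Definition coneGen (S : V -> Prop) : V -> Prop := fun x =>
  exists (s : seq V) (c : V -> R),
    (forall v, v \in s -> S v) /\ (forall v, 0 <= c v) /\
    x = \sum_(v <- s) c v *: v.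

Definition ratPolyCone (sigma : V -> Prop) : Prop :=
  exists s : seq V, (forall v, v \in s -> lattice v) /\
    forall x, sigma x <-> coneGen (fun v => v \in s) x.

Definition stronglyConvex (sigma : V -> Prop) : Prop :=
  forall x, sigma x -> sigma (- x) -> x = 0.

(* dim sigma = d : the linear span of sigma is all of N_R *)
Definition fullDim (sigma : V -> Prop) : Prop :=
  forall x, exists y z, sigma y /\ sigma z /\ x = y - z.

Definition face (sigma tau : V -> Prop) : Prop :=
  exists m : V, (forall y, sigma y -> 0 <= dotp m y) /\
    forall x, tau x <-> (sigma x /\ dotp m x = 0).

Definition isRay (sigma rho : V -> Prop) : Prop :=
  face sigma rho /\
  exists u : V, u != 0 /\ forall x, rho x <-> exists t : R, 0 <= t /\ x = t *: u.

Definition primGen (rho : V -> Prop) (u : V) : Prop :=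
  lattice u /\ u != 0 /\ rho u /\
  forall w, lattice w -> rho w -> exists k : nat, w = k%:R *: u.

Definition rayGen (sigma : V -> Prop) (u : V) : Prop :=
  exists rho, isRay sigma rho /\ primGen rho u.

(* Π ⊆ Σ is represented by the set of primitive generators of its rays. *)
Definition sigmaPi (sigma Pi : V -> Prop) : V -> Prop :=
  coneGen (fun v => Pi (- v) \/ (rayGen sigma v /\ ~ Pi v)).

Definition sigma1 (Pi : V -> Prop) : V -> Prop := coneGen Pi.

Definition sigma2 (sigma Pi : V -> Prop) : V -> Prop :=
  coneGen (fun v => rayGen sigma v /\ ~ Pi v).

End Cones.

(* Main.v *)
Require Import Defs.
From HB Require Import structures.
From mathcomp Require Import all_boot all_order all_algebra.
From mathcomp Require Import reals.
Import Order.TTheory GRing.Theory Num.Theory.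
Local Open Scope ring_scope.

Section Aux.
Variables (R : realType) (d : nat).
Local Notation V := 'rV[R]_d.

Lemma cg0 (S : V -> Prop) : coneGen S 0.
Proof. exists [::], (fun _ => 0); split=> //; split=> //; by rewrite big_nil. Qed.

Lemma sum_ifw (s : seq V) (w : V) (a : R) :
  \sum_(v <- s) (if v == w then a else 0) *: v = (a *+ count_mem w s) *: w.
Proof.
elim: s => [|u s IH]; first by rewrite big_nil mulr0n scale0r.
rewrite big_cons IH /= mulrnDr scalerDl; congr (_ + _).
by case: eqP => [->|_]; rewrite ?mulr1n ?mulr0n ?scale0r.
Qed.

Lemma cg_add1 (S : V -> Prop) w t x :
  S w -> 0 <= t -> coneGen S x -> coneGen S (t *: w + x).
Proof.
move=> Sw t0 [s [c [Ss [c0 ->]]]].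
have [ws|wns] := boolP (w \in s).
  have kpos : (0 < count_mem w s)%N by rewrite -has_count has_pred1.
  set k : R := (count_mem w s)%:R.
  have k0 : k != 0 by rewrite pnatr_eq0 -lt0n.
  exists s, (fun v => c v + (if v == w then t / k else 0)); split=> //; split.
    move=> v; apply: addr_ge0 => //; case: eqP => // _.
    by apply: divr_ge0 => //; rewrite ler0n.
  under [RHS]eq_bigr do rewrite scalerDl.
  rewrite big_split /= sum_ifw addrC; congr (_ + _).
  by rewrite -mulr_natr mulfVK.
exists (w :: s), (fun v => if v == w then t else c v); split.
  by move=> v; rewrite inE => /orP [/eqP ->|/Ss].
split; first by move=> v; case: eqP.
rewrite big_cons eqxx; congr (_ + _); apply: eq_big_seq => v vs.
by case: eqP => // vw; move: wns; rewrite -vw vs.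
Qed.

Lemma cg_add (S : V -> Prop) x y :
  coneGen S x -> coneGen S y -> coneGen S (x + y).
Proof.
move=> [s [c [Ss [c0 ->]]]] Hy; elim: s Ss => [|u s IH] Ss.
  by rewrite big_nil add0r.
rewrite big_cons -addrA; apply: cg_add1 => //.
  by apply: Ss; rewrite inE eqxx.
by apply: IH => v vs; apply: Ss; rewrite inE vs orbT.
Qed.

Lemma cg_scale (S : V -> Prop) k x :
  0 <= k -> coneGen S x -> coneGen S (k *: x).
Proof.
move=> k0 [s [c [Ss [c0 ->]]]]; exists s, (fun v => k * c v); split=> //; split.
  by move=> v; apply: mulr_ge0.
by rewrite scaler_sumr; apply: eq_bigr => v _; rewrite scalerA.
Qed.

Lemma cg_single (S : V -> Prop) v : S v -> coneGen S v.
Proof.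
move=> Sv; rewrite -[v]addr0 -[v in v + _]scale1r.
by apply: cg_add1 => //; apply: cg0.
Qed.

Lemma cg_sum (T : V -> Prop) (s : seq V) (c : V -> R) (f : V -> V) :
  (forall v, v \in s -> coneGen T (f v)) -> (forall v, 0 <= c v) ->
  coneGen T (\sum_(v <- s) c v *: f v).
Proof.
move=> H c0; elim: s H => [|u s IH] H; first by rewrite big_nil; apply: cg0.
rewrite big_cons; apply: cg_add.
  by apply: cg_scale => //; apply: H; rewrite inE eqxx.
by apply: IH => v vs; apply: H; rewrite inE vs orbT.
Qed.

Lemma cg_sub (S T : V -> Prop) x :
  (forall v, S v -> coneGen T v) -> coneGen S x -> coneGen T x.
Proof.
move=> H [s [c [Ss [c0 ->]]]]; apply: cg_sum => // v vs; exact: H (Ss v vs).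
Qed.

Lemma cg_mono (S T : V -> Prop) x :
  (forall v, S v -> T v) -> coneGen S x -> coneGen T x.
Proof. move=> H; apply: cg_sub => v Sv; apply: cg_single; exact: H. Qed.

Lemma cg_opp (S : V -> Prop) x :
  coneGen S x -> coneGen (fun v => S (- v)) (- x).
Proof.
move=> [s [c [Ss [c0 ->]]]].
rewrite -sumrN; under eq_bigr do rewrite -scalerN.
apply: cg_sum => // v vs; apply: cg_single; rewrite opprK; exact: Ss.
Qed.

End Aux.

Theorem mainTheorem7 (R : realType) (d : nat) (sigma : 'rV[R]_d -> Prop)
  (hrat : ratPolyCone sigma) (hsc : stronglyConvex sigma) (hdim : fullDim sigma)
  (Pi : 'rV[R]_d -> Prop) (hPi : forall u, Pi u -> rayGen sigma u) :
  (exists U : {vspace 'rV[R]_d}, U != 0%VS /\ forall x, x \in U -> sigmaPi sigma Pi x)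
  <-> (exists x : 'rV[R]_d, x != 0 /\ sigma1 Pi x /\ sigma2 sigma Pi x).
Proof.
have rs : forall u, rayGen sigma u -> sigma u.
  move=> u [rho [[[m [_ Hf]] _] [_ [_ [ru _]]]]]; by case: (Hf u).1.
case: hrat => s0 [_ Hs0].
have sig_cg : forall x, coneGen (rayGen sigma) x -> sigma x.
  move=> x Hx; apply/Hs0; apply: cg_sub Hx => v /rs /Hs0; exact.
have s1s : forall x, sigma1 Pi x -> sigma x.
  move=> x Hx; apply: sig_cg; apply: cg_mono Hx => v; exact: hPi.
have s2s : forall x, sigma2 sigma Pi x -> sigma x.
  move=> x Hx; apply: sig_cg; apply: cg_mono Hx => v []; done.
split.
  move=> [U [U0 HU]].
  set x := vpick U.
  have x0 : x != 0 by rewrite vpick0.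
  have decomp : forall y, sigmaPi sigma Pi y ->
      exists a b, sigma1 Pi a /\ sigma2 sigma Pi b /\ y = b - a.
    move=> y [s [c [Ss [c0 ->]]]].
    elim: s Ss => [|u s IH] Ss.
      exists 0, 0; rewrite big_nil subr0; split; first exact: cg0.
      by split=> //; apply: cg0.
    rewrite big_cons.
    have [a [b [Ha [Hb ->]]]] : exists a b, sigma1 Pi a /\ sigma2 sigma Pi b /\
        \sum_(v <- s) c v *: v = b - a.
      by apply: IH => v vs; apply: Ss; rewrite inE vs orbT.
    case: (Ss u (mem_head _ _)) => [Pu|Hu].
      exists (c u *: - u + a), b; split.
        by apply: cg_add1 => //; apply: c0.
      by split=> //; rewrite scalerN; rewrite opprD opprK addrCA.
    exists a, (c u *: u + b); split=> //; split.
      by apply: cg_add1 => //; apply: c0.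
    by rewrite addrA.
  have [a [b [Ha [Hb xe]]]] := decomp x (HU x (memv_pick U)).
  have [a' [b' [Ha' [Hb' xe']]]] := decomp (- x) (HU _ (etrans (memvN U x) (memv_pick U))).
  have ez : a + a' = b + b'.
    have h : (b - a) + (b' - a') = 0 by rewrite -xe -xe' subrr.
    apply/eqP; rewrite -subr_eq0 -oppr_eq0 -h; apply/eqP.
    by rewrite opprB opprD addrACA.
  exists (a + a'); split; last first.
    split; first exact: cg_add.
    by rewrite ez; apply: cg_add.
  apply/eqP => az.
  have a'0 : a' = 0.
    apply: hsc; first exact: s1s.
    have -> : - a' = a by apply/eqP; rewrite eq_sym -subr_eq0 opprK az.
    exact: s1s.
  have a0 : a = 0 by move: az; rewrite a'0 addr0.
  move: ez; rewrite az => /esym bz.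
  have b'0 : b' = 0.
    apply: hsc; first exact: s2s.
    have -> : - b' = b by apply/eqP; rewrite eq_sym -subr_eq0 opprK bz.
    exact: s2s.
  have b0 : b = 0 by move: bz; rewrite b'0 addr0.
  by move: x0; rewrite xe a0 b0 subr0 eqxx.
move=> [x [x0 [H1 H2]]].
exists <[x]>%VS; split.
  apply/negP => /eqP U0; move: (memv_line x); rewrite U0 memv0 => /eqP x0'.
  by move: x0; rewrite x0' eqxx.
move=> y /vlineP [k ->].
have [k0|k0] := lerP 0 k.
  apply: cg_scale => //; apply: cg_mono H2 => v Hv; by right.
have -> : k *: x = (- k) *: (- x) by rewrite scalerN scaleNr opprK.
apply: cg_scale; first by rewrite oppr_ge0 ltW.
apply: (@cg_mono _ _ _ _ _ _ (@cg_opp _ _ _ _ H1)) => v Hv; by left.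
Qed.
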